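(* Let $x,k,r$ be positive integers with $x>1$, and let $p$ be a prime, such that $x^3 + (x+1)^3 + \cdots + (x+k-1)^3 = p^{2r}$. If $k$ is even, then $2x+k-1 = p^t$ for some integer $t$ with $0<t<2r$. If $k$ is odd, then $2x+k-1 = 2p^t$ for some integer $t$ with $0<t<2r$. *)

(* Defs.v *)
From mathcomp Require Import all_boot.

(* Main.v *)
Require Import Defs.
From mathcomp Require Import all_boot.
From mathcomp Require Import ring zify.

Lemma sumcube x j : 8 * \sum_(0 <= i < j.+1) (x + i) ^ 3 = j.+1 * (2*x+j) * ((2*x+j)^2 + j*(j+2)).
Proof.
elim: j => [|j IH]; first by rewrite big_nat1 addn0; ring.
rewrite big_nat_recr //= mulnDr IH. ring.
Qed.

Theorem mainTheorem3 (x k r p : nat) :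
  1 < x -> 0 < k -> 0 < r -> prime p ->
  \sum_(0 <= i < k) (x + i) ^ 3 = p ^ (2 * r) ->
  (~~ odd k -> exists t : nat, 0 < t < 2 * r /\ 2 * x + k - 1 = p ^ t) /\
  (odd k -> exists t : nat, 0 < t < 2 * r /\ 2 * x + k - 1 = 2 * p ^ t).
Proof.
move=> hx; case: k => [//|j] _ hr hp hS.
have E := sumcube x j; rewrite hS in E.
have -> : 2 * x + j.+1 - 1 = 2 * x + j by lia.
have p1 : 1 < p by exact: prime_gt1.
split=> hk.
- have hmodd : odd (2 * x + j).
    by move: hk; rewrite /= negbK oddD oddM.
  have hdv : (2 * x + j) %| p ^ (2 * r).
    have : (2 * x + j) %| 8 * p ^ (2 * r).
      by rewrite E; apply/dvdn_mulr/dvdn_mull.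
    rewrite Gauss_dvdr //.
    have -> : 8 = 2 ^ 3 by [].
    by apply: coprimeXr; rewrite coprimen2 hmodd.
  have [t ht hm] := (dvdn_pfactor _ _ hp hdv) .
  exists t; split => //.
  apply/andP; split.
    case: t {ht} hm => //= hm; lia.
  rewrite ltn_neqAle ht andbT; apply/negP => /eqP ht'.
  rewrite ht' in hm; rewrite -hm in E.
  have hQ : 9 <= (2 * x + j) ^ 2 + j * (j + 2).
    have : 3 <= 2 * x + j by lia.
    move=> h3; apply: leq_trans (leq_addr _ _).
    by rewrite (_ : 9 = 3 ^ 2) // leq_exp2r.
  have E' : (2 * x + j) * 8 = (2 * x + j) * (j.+1 * ((2 * x + j) ^ 2 + j * (j + 2))).
    by rewrite mulnC E; ring.
  move/eqP: E'; rewrite eqn_pmul2l; last by lia.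
  move: hQ; move: ((2 * x + j) ^ 2 + j * (j + 2)) => Q hQ /eqP.
  rewrite mulSn; lia.
- move: hk => /= hk.
  have [l hl] : exists l, j = 2 * l.
    exists j./2; rewrite -[LHS]odd_double_half -muln2 mulnC.
    by move: hk; case: (odd j).
  subst j.
  have E2 : ((2 * l).+1) * (x + l) * ((x + l) ^ 2 + l * (l + 1)) = p ^ (2 * r).
    apply/eqP; rewrite -(eqn_pmul2l (_ : 0 < 8)) //; apply/eqP.
    rewrite E; ring.
  have hdv : (x + l) %| p ^ (2 * r).
    by rewrite -E2; apply/dvdn_mulr/dvdn_mull.
  have [t ht hm] := (dvdn_pfactor _ _ hp hdv) .
  exists t; split; last by rewrite -hm; lia.
  apply/andP; split.
    case: t {ht} hm => //= hm; lia.
  rewrite ltn_neqAle ht andbT; apply/negP => /eqP ht'.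
  rewrite ht' in hm; rewrite -hm in E2.
  have hQ : 4 <= (x + l) ^ 2 + l * (l + 1).
    apply: leq_trans (leq_addr _ _).
    by rewrite (_ : 4 = 2 ^ 2) // leq_exp2r //; lia.
  have E' : (x + l) * 1 = (x + l) * ((2 * l).+1 * ((x + l) ^ 2 + l * (l + 1))).
    by rewrite muln1; symmetry; rewrite -[RHS]E2; ring.
  move/eqP: E'; rewrite eqn_pmul2l; last by lia.
  move: hQ; move: ((x + l) ^ 2 + l * (l + 1)) => Q hQ /eqP.
  rewrite mulSn; lia.
Qed.
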